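(* For $\mathbf{x}=(x_1,\dots,x_N)^{\mathrm T}\in\mathbb{R}^N$ define $$\ell_{\mathrm{ter}}(\mathbf{x})=\Big(\sum_{n=1}^N x_n^2\Big)\Big(\sum_{n=1}^N x_n^6\Big)-\Big(\sum_{n=1}^N x_n^4\Big)^2.$$ Then $\ell_{\mathrm{ter}}(\mathbf{x})\ge0$ for all $\mathbf{x}$, and $\ell_{\mathrm{ter}}(\mathbf{x})=0$ if and only if $\mathbf{x}\in\{-\alpha,0,+\alpha\}^N$ for some $\alpha\in\mathbb{R}$. Furthermore, $\ell_{\mathrm{ter}}$ has no spurious stationary points: $\nabla\ell_{\mathrm{ter}}(\mathbf{x})=\mathbf{0}$ holds only if $\mathbf{x}\in\{-\alpha,0,+\alpha\}^N$ for some $\alpha\in\mathbb{R}$.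
   Context: A spurious stationary point of a differentiable function $\ell$ whose zero set is $\mathcal{X}$ is a point $\mathbf{x}\notin\mathcal{X}$ with $\nabla\ell(\mathbf{x})=\mathbf{0}$. *)

(* Defs.v *)
From HB Require Import structures.
From mathcomp Require Import all_boot all_order all_algebra.
From mathcomp Require Import all_classical all_reals all_analysis.
Set Implicit Arguments. Unset Strict Implicit. Unset Printing Implicit Defensive.
Import Order.TTheory GRing.Theory Num.Theory.
Import numFieldNormedType.Exports.
Local Open Scope ring_scope.

Definition ell_ter (R : realType) (N : nat) (x : 'rV[R]_N) : R :=
  (\sum_(n < N) x ord0 n ^+ 2) * (\sum_(n < N) x ord0 n ^+ 6)
  - (\sum_(n < N) x ord0 n ^+ 4) ^+ 2.

Definition ternary (R : realType) (N : nat) (x : 'rV[R]_N) : Prop :=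
  exists a : R, forall n : 'I_N, x ord0 n = - a \/ x ord0 n = 0 \/ x ord0 n = a.

Definition grad (R : realType) (N : nat) (f : 'rV[R]_N -> R) (x : 'rV[R]_N)
  : 'rV[R]_N :=
  \row_(i < N) ('D_(delta_mx ord0 i) f x).

(* Main.v *)
Require Import Defs.
From HB Require Import structures.
From mathcomp Require Import all_boot all_order all_algebra.
From mathcomp Require Import all_classical all_reals all_analysis.
From mathcomp Require Import ring lra.
Import Order.TTheory GRing.Theory Num.Theory.
Import numFieldNormedType.Exports.
Local Open Scope ring_scope.


Section S.
Variables (R : realType) (N : nat).
Lemma dcoord (x v : 'rV[R]_N) n :
  is_derive x v (fun y : 'rV[R]_N => y ord0 n) (v ord0 n).
Proof.
have @f : {linear 'rV[R]_N -> R}.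
  by exists (fun M : 'rV[R]_N => M ord0 n); do 2![eexists]; do ?[constructor];
     rewrite ?mxE// => ? *; rewrite ?mxE//; move=> ?; rewrite !mxE.
rewrite (_ : (fun _ => _) = f) //.
have fc : continuous f := @coord_continuous R 1 N ord0 n.
apply: DeriveDef; first exact/diff_derivable/linear_differentiable.
by rewrite deriveE ?diff_lin //; exact/linear_differentiable.
Qed.

Lemma dS k (x v : 'rV[R]_N) :
  is_derive x v (fun y : 'rV[R]_N => \sum_(n < N) y ord0 n ^+ k)
    (\sum_(n < N) (k%:R * x ord0 n ^+ k.-1) * v ord0 n).
Proof.
have := @is_derive_sum R _ _ N (fun n => (fun y : 'rV[R]_N => y ord0 n) ^+ k) x v
  (fun n => (k%:R * x ord0 n ^+ k.-1) *: v ord0 n) (fun n => is_deriveX k (dcoord x v n)).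
by rewrite fct_sumE; under eq_fun do under eq_bigr do rewrite exprfctE.
Qed.

Definition S k (y : 'rV[R]_N) := \sum_(n < N) y ord0 n ^+ k.

Lemma key (x : 'rV[R]_N) :
  2 * ell_ter x = \sum_(i < N) \sum_(j < N)
     (x ord0 i ^+ 2 * x ord0 j ^+ 2 * (x ord0 i ^+ 2 - x ord0 j ^+ 2) ^+ 2).
Proof.
have E : forall i j : 'I_N, x ord0 i ^+ 2 * x ord0 j ^+ 2 * (x ord0 i ^+ 2 - x ord0 j ^+ 2) ^+ 2
   = x ord0 i ^+ 2 * x ord0 j ^+ 6 + x ord0 j ^+ 2 * x ord0 i ^+ 6 - 2 * (x ord0 i ^+ 4 * x ord0 j ^+ 4).
  by move=> i j; ring.
under eq_bigr do under eq_bigr do rewrite E.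
rewrite /ell_ter.
under eq_bigr do rewrite sumrB big_split /= -mulr_sumr -mulr_sumr -mulr_sumr.
rewrite sumrB big_split /= -!mulr_suml -mulr_sumr -mulr_suml.
rewrite exchange_big /=.
rewrite (_ : \sum_(j < N) \sum_(i < N) x ord0 j ^+ 2 * x ord0 i ^+ 6 = (\sum_(i < N) x ord0 i ^+ 2) * \sum_(i < N) x ord0 i ^+ 6); last first.
  by rewrite mulr_suml; apply: eq_bigr => j _; rewrite mulr_sumr.
ring.
Qed.

Lemma ell_ge0 (x : 'rV[R]_N) : 0 <= ell_ter x.
Proof.
have : 0 <= 2 * ell_ter x.
  rewrite key; apply: sumr_ge0 => i _; apply: sumr_ge0 => j _.
  apply: mulr_ge0; [apply: mulr_ge0|]; exact: sqr_ge0.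
rewrite pmulr_rge0 //.
Qed.

Definition dSv k (x v : 'rV[R]_N) := \sum_(n < N) (k%:R * x ord0 n ^+ k.-1) * v ord0 n.

Lemma dell (x v : 'rV[R]_N) :
  'D_v (@ell_ter R N) x = S 2 x * dSv 6 x v + S 6 x * dSv 2 x v
     - (2%:R * S 4 x) * dSv 4 x v.
Proof.
have -> : @ell_ter R N = S 2 * S 6 - S 4 ^+ 2.
  by apply/funext => y; rewrite /ell_ter !fctE.
have h := is_deriveB (is_deriveM (dS 2 x v) (dS 6 x v)) (is_deriveX 2 (dS 4 x v)).
by rewrite derive_val /=.
Qed.

Lemma dSv_delta k (x : 'rV[R]_N) i :
  dSv k x (delta_mx ord0 i) = k%:R * x ord0 i ^+ k.-1.
Proof.
rewrite /dSv (bigD1 i) //= big1 ?addr0 => [|n ni]; rewrite mxE eqxx /=.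
  by rewrite eqxx mulr1.
by rewrite (negbTE ni) mulr0.
Qed.

Lemma euler (x : 'rV[R]_N) :
  \sum_(i < N) x ord0 i * (S 2 x * (6%:R * x ord0 i ^+ 5) + S 6 x * (2%:R * x ord0 i ^+ 1)
     - (2%:R * S 4 x) * (4%:R * x ord0 i ^+ 3)) = 8 * ell_ter x.
Proof.
have E : forall i : 'I_N, x ord0 i * (S 2 x * (6%:R * x ord0 i ^+ 5) + S 6 x * (2%:R * x ord0 i ^+ 1)
     - (2%:R * S 4 x) * (4%:R * x ord0 i ^+ 3)) =
   (6 * S 2 x) * x ord0 i ^+ 6 + (2 * S 6 x) * x ord0 i ^+ 2 - (8 * S 4 x) * x ord0 i ^+ 4.
  by move=> i; ring.
under eq_bigr do rewrite E.
rewrite sumrB big_split /= -!mulr_sumr /ell_ter /S; ring.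
Qed.

Lemma zero_ternary (x : 'rV[R]_N) : ell_ter x = 0 -> ternary x.
Proof.
move=> z.
have T : forall i j : 'I_N,
    x ord0 i ^+ 2 * x ord0 j ^+ 2 * (x ord0 i ^+ 2 - x ord0 j ^+ 2) ^+ 2 = 0.
  have K := key x; rewrite z mulr0 in K.
  have G : forall i j : 'I_N,
      0 <= x ord0 i ^+ 2 * x ord0 j ^+ 2 * (x ord0 i ^+ 2 - x ord0 j ^+ 2) ^+ 2.
    by move=> i j; apply: mulr_ge0; [apply: mulr_ge0|]; exact: sqr_ge0.
  move=> i j.
  have Hi : \sum_(j < N) x ord0 i ^+ 2 * x ord0 j ^+ 2 * (x ord0 i ^+ 2 - x ord0 j ^+ 2) ^+ 2 = 0.
    apply: (psumr_eq0P _ (esym K)) => // k _.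
    by apply: sumr_ge0 => l _; exact: G.
  by apply: (psumr_eq0P _ Hi) => // k _; exact: G.
case: (boolP [exists k, x ord0 k != 0]) => [/existsP [k xk]|/existsPn nz].
  exists (x ord0 k) => n.
  have := T n k; move/eqP; rewrite mulf_eq0 => /orP [].
    rewrite mulf_eq0 sqrf_eq0 sqrf_eq0 (negbTE xk) orbF => /eqP ->.
    by right; left.
  rewrite sqrf_eq0 subr_eq0 eqf_sqr => /orP [/eqP -> | /eqP ->]; first by right; right.
  by left.
exists 0 => n; right; left.
by have := nz n; rewrite negbK => /eqP.
Qed.

Lemma ternary_zero (x : 'rV[R]_N) : ternary x -> ell_ter x = 0.
Proof.
move=> [a Ha].
have sq : forall n, x ord0 n ^+ 2 = 0 \/ x ord0 n ^+ 2 = a ^+ 2.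
  move=> n; case: (Ha n) => [->|[->|->]]; last by right.
    by right; rewrite sqrrN.
  by left; rewrite expr0n.
have : 2 * ell_ter x = 0.
  rewrite key; apply: big1 => i _; apply: big1 => j _.
  by case: (sq i) => ->; case: (sq j) => ->; ring.
by move/eqP; rewrite mulf_eq0 pnatr_eq0 /= => /eqP.
Qed.

End S.

Theorem mainTheorem5 (R : realType) (N : nat) :
  (forall x : 'rV[R]_N, 0 <= ell_ter x) /\
  (forall x : 'rV[R]_N, ell_ter x = 0 <-> ternary x) /\
  (forall x : 'rV[R]_N, grad (@ell_ter R N) x = 0 -> ternary x).
Proof.
split; first exact: ell_ge0.
split; first by move=> x; split; [exact: zero_ternary | exact: ternary_zero].
move=> x g; apply: zero_ternary.
have D : forall i : 'I_N, 'D_(delta_mx ord0 i) (@ell_ter R N) x = 0.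
  by move=> i; have := congr1 (fun M : 'rV[R]_N => M ord0 i) g; rewrite !mxE.
have := @euler R N x.
rewrite big1 => [|i _].
  by move/esym/eqP; rewrite mulf_eq0 pnatr_eq0 /= => /eqP.
by have := D i; rewrite dell !dSv_delta /= => ->; rewrite mulr0.
Qed.
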